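(* Let $(A,\mathfrak m)$ be a Noetherian local ring with infinite residue field, $\mathfrak q$ an $\mathfrak m$-primary ideal, $M$ a finitely generated $A$-module of dimension $d$, $\mathbb M=\{M_j\}_{j\ge0}$ a good $\mathfrak q$-filtration of $M$, and $J$ the ideal generated by a maximal $\mathbb M$-superficial sequence for $\mathfrak q$. Let $S_J(\mathbb M)=\bigoplus_{n\ge1}M_{n+1}/J^nM_1$ be the Sally module. If $\dim S_J(\mathbb M)=d$, then $$e_0(S_J(\mathbb M))\le\sum_{j\ge1}v_j(\mathbb M)=\sum_{j\ge1}\lambda(M_{j+1}/JM_j).$$
   Context: $\lambda$ denotes length. A $\mathfrak q$-filtration of $M$ is a chain of submodules $M=M_0\supseteq M_1\supseteq\cdots$ with $\mathfrak qM_j\subseteq M_{j+1}$; it is good if $M_{j+1}=\mathfrak qM_j$ for $j\gg0$. An element $a\in\mathfrak q$ is $\mathbb M$-superficial for $\mathfrak q$ if there is $c\ge0$ with $(M_{j+1}:_Ma)\cap M_c=M_j$ for all $j\ge c$. A sequence $a_1,\dots,a_r$ is $\mathbb M$-superficial for $\mathfrak q$ if each $a_i$ is superficial for $\mathfrak q$ with respect to the filtration $\{(M_j+(a_1,\dots,a_{i-1})M)/(a_1,\dots,a_{i-1})M\}_j$ of $M/(a_1,\dots,a_{i-1})M$; it is maximal when $r=d$. The Sally module $S_J(\mathbb M)$ is a graded module over the Rees algebra $A[Jt]=\bigoplus_{n\ge0}J^nt^n$ (with $J^kt^k$ mapping $M_{n+1}/J^nM_1$ to $M_{n+k+1}/J^{n+k}M_1$);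 its dimension is its Krull dimension as such. Its Hilbert series is $P_{S_J(\mathbb M)}(z)=\sum_{n\ge1}\lambda(M_{n+1}/J^nM_1)z^n$; when $\dim S_J(\mathbb M)=d$ one writes $P_{S_J(\mathbb M)}(z)=h(z)/(1-z)^d$ with $h\in\mathbb Z[z]$ and $e_0(S_J(\mathbb M))=h(1)$. *)

(* Defs.v *)
From mathcomp Require Import all_boot all_order all_algebra.
Set Implicit Arguments. Unset Strict Implicit. Unset Printing Implicit Defensive.
Import Order.TTheory GRing.Theory Num.Theory.
Local Open Scope ring_scope.

Definition subp {T : Type} (P Q : T -> Prop) := forall x, P x -> Q x.
Definition eqp {T : Type} (P Q : T -> Prop) := forall x, P x <-> Q x.
Definition ssubp {T : Type} (P Q : T -> Prop) :=
  subp P Q /\ exists x, Q x /\ ~ P x.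

Section Alg.
Variable A : comNzRingType.

(* I is an ideal of the subring with carrier C (C = everything for A). *)
Definition idealIn (C I : A -> Prop) :=
  subp I C /\ I 0 /\ (forall x y, I x -> I y -> I (x - y)) /\
  (forall c x, C c -> I x -> I (c * x)).
Definition ideal (I : A -> Prop) := idealIn (fun _ => True) I.

Definition primeIn (C P : A -> Prop) :=
  idealIn C P /\ ~ P 1 /\ (forall x y, C x -> C y -> P (x * y) -> P x \/ P y).

Definition maximal_ideal (I : A -> Prop) :=
  ideal I /\ ~ I 1 /\
  forall K, ideal K -> subp I K -> eqp K I \/ K 1.

Definition noetherian :=
  forall I : nat -> A -> Prop, (forall n, ideal (I n)) ->
  (forall n, subp (I n) (I n.+1)) ->
  exists N, forall n, (N <= n)%N -> eqp (I n) (I N).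

Definition local_ring (m : A -> Prop) :=
  maximal_ideal m /\ forall m', maximal_ideal m' -> eqp m' m.

(* the residue field A/m is infinite: no finite list represents all classes *)
Definition infinite_residue (m : A -> Prop) :=
  forall s : seq A, exists x, forall y, y \in s -> ~ m (x - y).

Definition radical (I : A -> Prop) x := exists n, I (x ^+ n).

Definition primary_ideal (I : A -> Prop) :=
  ideal I /\ ~ I 1 /\ forall x y, I (x * y) -> ~ I x -> radical I y.

Definition m_primary (m q : A -> Prop) := primary_ideal q /\ eqp (radical q) m.

Definition idealprod (I K : A -> Prop) x :=
  exists s : seq (A * A), (forall p, p \in s -> I p.1 /\ K p.2) /\
    x = \sum_(p <- s) p.1 * p.2.

Fixpoint idealpow (I : A -> Prop) (n : nat) : A -> Prop :=
  match n with 0 => fun _ => True | n'.+1 => idealprod I (idealpow I n') end.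

Definition gen_ideal (s : seq A) x :=
  exists c : seq A, x = \sum_(i < size s) c`_i * s`_i.

Definition prime_chain (C I : A -> Prop) (n : nat) :=
  exists p : nat -> A -> Prop,
    (forall i, (i <= n)%N -> primeIn C (p i) /\ subp I (p i)) /\
    (forall i, (i < n)%N -> ssubp (p i) (p i.+1)).

(* Krull dimension of C/I equals d *)
Definition krull_dim_eq (C I : A -> Prop) (d : nat) :=
  prime_chain C I d /\ ~ prime_chain C I d.+1.

Section Mod.
Variable M : lmodType A.

Definition submodule (N : M -> Prop) :=
  N 0 /\ (forall x y, N x -> N y -> N (x + y)) /\ (forall c x, N x -> N (c *: x)).

Definition addsub (N K : M -> Prop) x := exists y z, N y /\ K z /\ x = y + z.

Definition modprod (I : A -> Prop) (N : M -> Prop) x :=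
  exists s : seq (A * M), (forall p, p \in s -> I p.1 /\ N p.2) /\
    x = \sum_(p <- s) p.1 *: p.2.

Definition fin_gen :=
  exists s : seq M, forall x, exists c : seq A, x = \sum_(i < size s) c`_i *: s`_i.

Definition annihilator (a : A) := forall x : M, a *: x = 0.

(* dimension of M = Krull dimension of A / Ann(M) *)
Definition module_dim_eq (d : nat) := krull_dim_eq (fun _ => True) annihilator d.

(* lambda(P/Q) = k, for submodules Q of P: maximal length of strict chains *)
Definition schain (Q P : M -> Prop) (k : nat) :=
  exists N : nat -> M -> Prop,
    eqp (N 0%N) Q /\ eqp (N k) P /\ (forall i, submodule (N i)) /\
    (forall i, (i < k)%N -> ssubp (N i) (N i.+1)).
Definition length_eq (P Q : M -> Prop) (k : nat) :=
  schain Q P k /\ ~ schain Q P k.+1.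

Definition qfiltration (q : A -> Prop) (F : nat -> M -> Prop) :=
  (forall x, F 0%N x) /\ (forall j, submodule (F j)) /\
  (forall j, subp (F j.+1) (F j)) /\ (forall j, subp (modprod q (F j)) (F j.+1)).
Definition good_qfiltration q F :=
  qfiltration q F /\ exists n0, forall j, (n0 <= j)%N -> eqp (F j.+1) (modprod q (F j)).

(* a is superficial for q w.r.t. the induced filtration on M/K,
   K a submodule; statement pulled back along M -> M/K. *)
Definition superficial_mod (q : A -> Prop) (F : nat -> M -> Prop) (K : M -> Prop) (a : A) :=
  q a /\ exists c, forall j, (c <= j)%N -> forall x,
    (addsub (F j.+1) K (a *: x) /\ addsub (F c) K x) <-> addsub (F j) K x.

Definition superficial_seq q F (s : seq A) :=
  forall i, (i < size s)%N ->
    superficial_mod q F (modprod (gen_ideal (take i s)) (fun _ => True)) s`_i.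

(* Rees algebra A[Jt] as a subring of {poly A} *)
Definition rees (J : A -> Prop) (p : {poly A}) := forall k, idealpow J k p`_k.

End Mod.
End Alg.

Section Sally.
Variables (A : comNzRingType) (M : lmodType A).

(* annihilator in A[Jt] of the Sally module (+)_{n>=1} F_{n+1}/J^n F_1;
   J^k t^k sends degree n to degree n+k. *)
Definition sally_ann (J : A -> Prop) (F : nat -> M -> Prop) (p : {poly A}) :=
  rees J p /\ forall k n x, (1 <= n)%N -> F n.+1 x ->
     modprod (idealpow J (n + k)) (F 1%N) (p`_k *: x).

Definition sally_dim_eq J F d :=
  @krull_dim_eq {poly A} (rees J) (sally_ann J F) d.
End Sally.

(* Main.v *)
Require Import Defs.
From mathcomp Require Import all_boot all_order all_algebra.
From Stdlib Require Import Classical FunctionalExtensionality.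
From mathcomp Require Import zify.
From Stdlib Require Import Lia.
Import Order.TTheory GRing.Theory Num.Theory.
Set Implicit Arguments. Unset Strict Implicit. Unset Printing Implicit Defensive.
Local Open Scope ring_scope.


Section Chains.
Variables (A : comNzRingType) (M : lmodType A).
Implicit Types (P Q R X Y : M -> Prop) (N : nat -> M -> Prop).

Definition chainP N k := (forall i, (i <= k)%N -> submodule (N i)) /\
  (forall i, (i < k)%N -> ssubp (N i) (N i.+1)).

Definition bnd Q P b := forall N k, chainP N k -> subp Q (N 0%N) -> subp (N k) P -> (k <= b)%N.

Lemma sub0 X : submodule X -> X 0. Proof. by case. Qed.
Lemma subD X x y : submodule X -> X x -> X y -> X (x + y).
Proof. by case=> _ [h _]; apply: h. Qed.
Lemma subZ X c x : submodule X -> X x -> X (c *: x).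
Proof. by case=> _ [_ h]; apply: h. Qed.
Lemma subN X x : submodule X -> X x -> X (- x).
Proof. by move=> sX Xx; rewrite -scaleN1r; apply: subZ. Qed.
Lemma subB X x y : submodule X -> X x -> X y -> X (x - y).
Proof. by move=> sX Xx Xy; apply: subD => //; apply: subN. Qed.
Lemma sub_sum X (I : Type) (r : seq I) (Pr : pred I) F : submodule X ->
  (forall i, Pr i -> X (F i)) -> X (\sum_(i <- r | Pr i) F i).
Proof. move=> sX h; apply: (@big_ind M X) => //; [exact: sub0 | move=> x y; exact: subD]. Qed.

Lemma subp_trans (T : Type) (P1 P2 P3 : T -> Prop) : subp P1 P2 -> subp P2 P3 -> subp P1 P3.
Proof. by move=> h1 h2 x /h1 /h2. Qed.
Lemma ssubp_subp (T : Type) (P1 P2 : T -> Prop) : ssubp P1 P2 -> subp P1 P2.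
Proof. by case. Qed.
Lemma ssubp_trans_l (T : Type) (P1 P2 P3 : T -> Prop) : subp P1 P2 -> ssubp P2 P3 -> ssubp P1 P3.
Proof. move=> h [h2 [x [h3 h4]]]; split; first exact: subp_trans h2.
by exists x; split => // /h. Qed.
Lemma ssubp_trans_r (T : Type) (P1 P2 P3 : T -> Prop) : ssubp P1 P2 -> subp P2 P3 -> ssubp P1 P3.
Proof. move=> [h2 [x [h3 h4]]] h; split; first exact: subp_trans h.
by exists x; split => //; apply: h. Qed.

Lemma bnd_mono Q P Q' P' b : bnd Q P b -> subp Q Q' -> subp P' P -> bnd Q' P' b.
Proof.
move=> hb hQ hP N k cN h0 hk; apply: (hb N k cN).
- exact: subp_trans h0.
- exact: subp_trans hP.
Qed.

Lemma chain_mono N k i j : chainP N k -> (i <= j)%N -> (j <= k)%N -> subp (N i) (N j).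
Proof.
move=> [_ hs] hij; elim: j hij => [|j IH] hij hjk.
  by rewrite leqn0 in hij; move/eqP: hij => ->.
rewrite leq_eqVlt in hij; case/orP: hij => [/eqP ->|hlt]; first by [].
apply: subp_trans (IH _ (ltnW hjk)) (ssubp_subp (hs _ hjk)); exact: hlt.
Qed.

Definition ext N k X := fun i => if (i <= k)%N then N i else X.

Lemma chain_ext N k X : chainP N k -> submodule X -> ssubp (N k) X -> chainP (ext N k X) k.+1.
Proof.
move=> [h1 h2] sX hk; split.
  by move=> i hi; rewrite /ext; case: ifP => // /h1.
move=> i hi; rewrite /ext; rewrite ltnS in hi; rewrite hi.
rewrite leq_eqVlt in hi; case/orP: hi => [/eqP ->|hlt]; first by rewrite ltnn.
by rewrite hlt; apply: h2.
Qed.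

Lemma bnd_of_length P Q v : submodule P -> submodule Q -> length_eq P Q v -> bnd Q P v.
Proof.
move=> sP sQ [_ hn] N k cN h0 hk; rewrite leqNgt; apply/negP => hvk; apply: hn.
pose N' := fun i => if i == 0%N then Q else if (i <= v)%N then N i else P.
exists N'; split; first by move=> x; rewrite /N' /=.
split; first by move=> x; rewrite /N' /= ltnn.
split.
  move=> i; rewrite /N'; case: ifP => // _; case: ifP => // hiv; apply: (proj1 cN).
  exact: leq_trans hiv (ltnW hvk).
move=> i hi; rewrite /N' /=.
have hN : forall j, (j <= k)%N -> subp (N j) P.
  move=> j hj; apply: subp_trans hk; exact: chain_mono cN hj (leqnn _).
have hS : forall j, (j < k)%N -> ssubp (N j) (N j.+1) := proj2 cN.
case: ifP => [/eqP ->|hi0].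
  case: ifP => hv.
    apply: ssubp_trans_l h0 _; apply: hS; lia.
  apply: ssubp_trans_l h0 _; apply: ssubp_trans_r (hS 0%N _) _; first lia.
  apply: hN; lia.
have hiv : (i <= v)%N by lia.
rewrite hiv. case: ifP => hv.
  apply: hS; lia.
have -> : i = v by lia.
apply: ssubp_trans_r (hS v hvk) _; exact: hN.
Qed.

Definition capP X Y := fun x => X x /\ Y x.

Lemma sub_cap X Y : submodule X -> submodule Y -> submodule (capP X Y).
Proof.
move=> sX sY; split; first by split; apply: sub0.
split; first by move=> x y [? ?] [? ?]; split; apply: subD.
by move=> c x [? ?]; split; apply: subZ.
Qed.

Lemma sub_add X Y : submodule X -> submodule Y -> submodule (addsub X Y).
Proof.
move=> sX sY; split; first by exists 0, 0; rewrite addr0; split; [apply: sub0|split=>//; apply: sub0].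
split.
  move=> x y [x1 [x2 [h1 [h2 ->]]]] [y1 [y2 [h3 [h4 ->]]]].
  exists (x1 + y1), (x2 + y2); split; first exact: subD.
  split; first exact: subD.
  by rewrite addrACA.
move=> c x [x1 [x2 [h1 [h2 ->]]]]; exists (c *: x1), (c *: x2); rewrite scalerDr.
by split; [apply: subZ|split=>//; apply: subZ].
Qed.

Lemma subadd_split Q R N k : submodule R -> chainP N k -> subp Q (N 0%N) -> subp Q R ->
  exists s t, (s + t = k)%N /\
   (exists I, chainP I s /\ subp Q (I 0%N) /\ subp (I s) (capP (N k) R)) /\
   (exists S, chainP S t /\ subp R (S 0%N) /\ subp (S t) (addsub (N k) R)).
Proof.
move=> sR; elim: k N => [|k IH] N cN h0 hQR.
  exists 0%N, 0%N; split => //; split.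
    exists (fun _ => capP (N 0%N) R); split; last by split => // x hx; split; [apply: h0|apply: hQR].
    split => // i _; apply: sub_cap => //; exact: (proj1 cN).
  exists (fun _ => addsub (N 0%N) R); split; last first.
    by split => // x hx; exists 0, x; rewrite add0r; split => //; apply: sub0; apply: (proj1 cN).
  split => // i _; apply: sub_add => //; exact: (proj1 cN).
have cN' : chainP N k.
  by case: cN => h1 h2; split=> i hi; [apply: h1; apply: leqW | apply: h2; apply: leqW].
have [s [t [hst [[I [cI [hI0 hIs]]] [S [cS [hS0 hSt]]]]]]] := IH N cN' h0 hQR.
have sNk : submodule (N k) := proj1 cN k (leqnSn _).
have sNk1 : submodule (N k.+1) := proj1 cN k.+1 (leqnn _).
have sk : ssubp (N k) (N k.+1) := proj2 cN k (leqnn _).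
have hsub := ssubp_subp sk.
have capsub : subp (capP (N k) R) (capP (N k.+1) R) by move=> x [h1 h2]; split => //; apply: hsub.
have addsub' : subp (addsub (N k) R) (addsub (N k.+1) R).
  by move=> x [y [z [h1 [h2 ->]]]]; exists y, z; split => //; apply: hsub.
case: (classic (ssubp (capP (N k) R) (capP (N k.+1) R))) => hc.
  exists s.+1, t; split; first by rewrite addSn hst.
  split.
    exists (ext I s (capP (N k.+1) R)); split.
      apply: chain_ext => //; first exact: sub_cap.
      exact: ssubp_trans_l hIs hc.
    by split; rewrite /ext ?leq0n ?ltnn //.
  exists S; split => //; split => //; exact: subp_trans hSt addsub'.
case: (classic (ssubp (addsub (N k) R) (addsub (N k.+1) R))) => ha.
  exists s, t.+1; split; first by rewrite addnS hst.
  split.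
    exists I; split => //; split => //; exact: subp_trans hIs capsub.
  exists (ext S t (addsub (N k.+1) R)); split.
    apply: chain_ext => //; first exact: sub_add.
    exact: ssubp_trans_l hSt ha.
  by split; rewrite /ext ?leq0n ?ltnn //.
exfalso; case: sk => _ [z [hz1 hz2]]; apply: hz2.
have : addsub (N k.+1) R z by exists z, 0; rewrite addr0; split => //; split => //; apply: sub0.
move=> hz; have : addsub (N k) R z.
  apply: NNPP => hn; apply: ha; split => //; exists z; split => //.
move=> [y [r [hy [hr hzyr]]]].
have hrN : N k.+1 r.
  have -> : r = z - y by rewrite hzyr addrC addKr.
  by apply: subB => //; apply: hsub.
have : capP (N k) R r.
  apply: NNPP => hn; apply: hc; split => //; exists r; split => //.
by move=> [hrk _]; rewrite hzyr; apply: subD.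
Qed.

Lemma bnd_add Q R P a b : submodule P -> submodule R -> subp Q R -> subp R P -> bnd Q R a -> bnd R P b -> bnd Q P (a + b).
Proof.
move=> sP sR hQR hRP ha hb N k cN h0 hk.
have [s [t [hst [[I [cI [hI0 hIs]]] [S [cS [hS0 hSt]]]]]]] := subadd_split sR cN h0 hQR.
subst k; apply: leq_add.
  by apply: (ha I s cI hI0); apply: subp_trans hIs _ => x [].
apply: (hb S t cS hS0); apply: subp_trans hSt _ => x [y [z [hy [hz ->]]]].
by apply: (subD sP); [apply: hk | apply: hRP].
Qed.

Lemma bnd_refl X : bnd X X 0.
Proof.
move=> N k cN h0 hk; rewrite leqn0; apply/negP => /negP hk0.
have hk1 : (0 < k)%N by rewrite lt0n.
case: (proj2 cN 0%N hk1) => _ [x [hx1 hx2]]; apply: hx2; apply: h0; apply: hk.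
exact: chain_mono cN hk1 (leqnn _) _ hx1.
Qed.

Lemma bnd_tele (Rs : nat -> M -> Prop) (b : nat -> nat) n :
  (forall j, (j <= n)%N -> submodule (Rs j)) ->
  (forall j, (j < n)%N -> subp (Rs j) (Rs j.+1)) ->
  (forall j, (j < n)%N -> bnd (Rs j) (Rs j.+1) (b j)) ->
  bnd (Rs 0%N) (Rs n) (\sum_(j < n) b j).
Proof.
elim: n => [|n IH] hs hi hb; first by rewrite big_ord0; apply: bnd_refl.
rewrite big_ord_recr /=; apply: (@bnd_add _ (Rs n)).
- exact: hs.
- exact: hs.
- elim: n {IH hb} hs hi => [|n IHn] hs hi; first by move=> x.
  apply: subp_trans (hi n _); last by apply: ltnW.
  apply: IHn => j hj; [apply: hs; exact: leqW | apply: hi; exact: leqW].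
- exact: hi.
- apply: IH => j hj; [apply: hs; exact: leqW | apply: hi; exact: leqW | apply: hb; exact: leqW].
- exact: hb.
Qed.

Lemma bnd_mul (c : A) Y X R P b : submodule X -> subp Y X ->
  (forall y, Y y -> R (c *: y)) -> bnd Y X b ->
  (forall z, P z -> exists x r, X x /\ R r /\ z = c *: x + r) -> bnd R P b.
Proof.
move=> sX hYX hYR hb hP N k cN h0 hk.
pose Pb i := fun x => X x /\ N i (c *: x).
apply: (hb Pb k).
- split.
    move=> i hi; have sN := proj1 cN i hi; split; first by split; [apply: sub0|rewrite scaler0; apply: sub0].
    split; first by move=> x y [h1 h2] [h3 h4]; split; [apply: subD|rewrite scalerDr; apply: subD].
    by move=> a x [h1 h2]; split; [apply: subZ|rewrite scalerA mulrC -scalerA; apply: subZ].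
  move=> i hi; have sN1 := proj1 cN i.+1 hi; have [hs [z [hz1 hz2]]] := proj2 cN i hi.
  split; first by move=> x [h1 h2]; split => //; apply: hs.
  have [x [r [hx [hr hzx]]]] := hP z (hk z (chain_mono cN hi (leqnn _) hz1)).
  have hrN : N i r by apply: (chain_mono cN (leq0n i) (ltnW hi)); apply: h0.
  exists x; split.
    split => //; have -> : c *: x = z - r by rewrite hzx addrK.
    apply: subB => //; exact: (ssubp_subp (proj2 cN i hi)).
  move=> [_ hcx]; apply: hz2; rewrite hzx; apply: subD => //; exact: (proj1 cN i (ltnW hi)).
- by move=> y hy; split; [apply: hYX | apply: h0; apply: hYR].
- by move=> x [].
Qed.

End Chains.


Section Ring.
Variable A : comNzRingType.
Implicit Types (I J K : A -> Prop) (s t u : seq A).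

Definition idl I := I 0 /\ (forall x y, I x -> I y -> I (x + y)) /\ (forall c x, I x -> I (c * x)).

Lemma gen_idealP s x : gen_ideal s x <-> exists f : nat -> A, x = \sum_(i < size s) f i * s`_i.
Proof.
split; first by move=> [c ->]; exists (fun i => c`_i).
move=> [f ->]; exists (mkseq f (size s)); apply: eq_bigr => i _; by rewrite nth_mkseq.
Qed.

Lemma idl_sum I (T : Type) (r : seq T) (P : pred T) F : idl I -> (forall i, P i -> I (F i)) ->
  I (\sum_(i <- r | P i) F i).
Proof. move=> [h0 [hD _]] h; apply: (@big_ind A I) => //. Qed.

Lemma gen_idl s : idl (gen_ideal s).
Proof.
split; first by apply/gen_idealP; exists (fun _ => 0); rewrite big1 // => i _; rewrite mul0r.
split.
  move=> x y /gen_idealP [f ->] /gen_idealP [g ->]; apply/gen_idealP.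
  by exists (fun i => f i + g i); rewrite -big_split /=; apply: eq_bigr => i _; rewrite mulrDl.
move=> c x /gen_idealP [f ->]; apply/gen_idealP; exists (fun i => c * f i).
by rewrite mulr_sumr; apply: eq_bigr => i _; rewrite mulrA.
Qed.

Lemma gen_nth s i : (i < size s)%N -> gen_ideal s s`_i.
Proof.
move=> hi; apply/gen_idealP; exists (fun j => if j == i then 1 else 0).
rewrite (bigD1 (Ordinal hi)) //= eqxx mul1r big1 ?addr0 // => j hj.
by rewrite ifN ?mul0r //; apply: contra hj => /eqP hj; apply/eqP/val_inj.
Qed.

Lemma gen_mem s y : y \in s -> gen_ideal s y.
Proof. by move=> hy; rewrite -(nth_index 0 hy); apply: gen_nth; rewrite index_mem. Qed.

Lemma gen_sub s I x : I 0 -> (forall x y, I x -> I y -> I (x + y)) ->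
  (forall c y, y \in s -> I (c * y)) -> gen_ideal s x -> I x.
Proof.
move=> h0 hD hM /gen_idealP [f ->]; apply: (@big_ind A I) => // i _.
by apply: hM; apply: mem_nth.
Qed.

Lemma gen_subl s t : {subset s <= t} -> subp (gen_ideal s) (gen_ideal t).
Proof.
move=> hst x; have [h0 [hD hM]] := gen_idl t.
apply: gen_sub => // c y /hst hy; apply: hM; exact: gen_mem.
Qed.

Lemma gen_map x s z : gen_ideal s z -> gen_ideal (map (fun y => x * y) s) (x * z).
Proof.
move=> /gen_idealP [f ->]; apply/gen_idealP; exists f; rewrite size_map mulr_sumr.
by apply: eq_bigr => i _; rewrite (nth_map 0) // mulrCA.
Qed.

Lemma gen_mul s t u y z : (forall y z, y \in s -> z \in t -> gen_ideal u (y * z)) ->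
  gen_ideal s y -> gen_ideal t z -> gen_ideal u (y * z).
Proof.
move=> h hy hz; have [h0 [hD hM]] := gen_idl u.
apply: (gen_sub (I := fun y => gen_ideal u (y * z))) hy.
- by rewrite mul0r.
- by move=> x1 x2 h1 h2; rewrite mulrDl; apply: hD.
move=> c y1 hy1; rewrite -mulrA; apply: (hM).
apply: (gen_sub (I := fun z => gen_ideal u (y1 * z))) hz.
- by rewrite mulr0.
- by move=> x1 x2 h1 h2; rewrite mulrDr; apply: hD.
move=> c2 z1 hz1; rewrite mulrCA; apply: (hM); exact: h.
Qed.

Lemma idl_prod I K : idl I -> idl (idealprod I K).
Proof.
move=> [h0 [hD hM]]; split; first by exists [::]; rewrite big_nil.
split.
  move=> x y [s1 [hs1 ->]] [s2 [hs2 ->]]; exists (s1 ++ s2); rewrite big_cat; split => //.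
  by move=> p; rewrite mem_cat => /orP [/hs1|/hs2].
move=> c x [s1 [hs1 ->]]; exists (map (fun p => (c * p.1, p.2)) s1); split.
  by move=> p /mapP [q /hs1 [h1 h2] ->]; split => //; apply: hM.
by rewrite big_map mulr_sumr; apply: eq_bigr => i _; rewrite mulrA.
Qed.

Lemma idl_pow I k : idl I -> idl (idealpow I k).
Proof. by move=> hI; case: k => [|k] //=; apply: idl_prod. Qed.

Lemma prod_mono I I' K K' : subp I I' -> subp K K' -> subp (idealprod I K) (idealprod I' K').
Proof. move=> h1 h2 x [s [hs ->]]; exists s; split => // p /hs [? ?]; split; [exact: h1|exact: h2]. Qed.

Lemma pow_mono I I' k : subp I I' -> subp (idealpow I k) (idealpow I' k).
Proof. by move=> h; elim: k => [|k IH] //= x; apply: prod_mono. Qed.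

Lemma prod_elem I K x y : I x -> K y -> idealprod I K (x * y).
Proof. by move=> hx hy; exists [:: (x, y)]; rewrite big_seq1; split => // p; rewrite inE => /eqP ->. Qed.

Fixpoint mono (k : nat) : seq A -> seq A :=
  match k with
  | 0 => fun _ => [:: 1]
  | k'.+1 => fix mk a := match a with
      | [::] => [::]
      | x :: a' => map (fun y => x * y) (mono k' (x :: a')) ++ mk a'
      end
  end.

Lemma monoS k (x : A) (a : seq A) : mono k.+1 (x :: a) = map (fun y => x * y) (mono k (x :: a)) ++ mono k.+1 a.
Proof. by []. Qed.

Lemma mono0 (a : seq A) : mono 0 a = [:: 1].
Proof. by []. Qed.

Lemma gen_cons (x : A) (a : seq A) : subp (gen_ideal a) (gen_ideal (x :: a)).
Proof. by apply: gen_subl => y hy; rewrite inE hy orbT. Qed.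

Lemma mono_in k a l : l \in mono k a -> idealpow (gen_ideal a) k l.
Proof.
elim: k a l => [|k IHk] a l; first by [].
elim: a l => [|x a IHa] l //; rewrite monoS mem_cat => /orP [/mapP [y hy ->]|hl].
  apply: prod_elem; first by apply: gen_mem; rewrite inE eqxx.
  exact: IHk.
exact: (pow_mono (k := k.+1) (gen_cons x (a := a))) (IHa l hl).
Qed.

Lemma mono_key a k i m : (i < size a)%N -> m \in mono k a -> gen_ideal (mono k.+1 a) (a`_i * m).
Proof.
elim: a k i m => [|x a IHa] k i m hi //.
elim: k i m hi => [|k IHk] i m hi.
  rewrite mono0 inE => /eqP ->; rewrite mulr1; case: i hi => [|i] hi.
    change ((x :: a)`_0) with x.
    by apply: gen_mem; rewrite monoS mem_cat mono0 /= inE mulr1 eqxx.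
  change ((x :: a)`_i.+1) with (a`_i).
  apply: gen_subl (_ : gen_ideal (mono 1 a) (a`_i)).
    by move=> y hy; rewrite monoS mem_cat hy orbT.
  by have := IHa 0%N i 1 hi; rewrite mulr1; apply; rewrite mono0 inE.
rewrite monoS mem_cat => /orP [/mapP [m' hm' ->]|hm].
  case: i hi => [|i] hi.
    change ((x :: a)`_0) with x.
    by apply: gen_mem; rewrite monoS mem_cat; apply/orP; left; apply/mapP; exists (x * m') => //; rewrite monoS mem_cat map_f.
  change ((x :: a)`_i.+1) with (a`_i).
  rewrite mulrCA; apply: gen_subl (gen_map x (IHk i.+1 m' hi hm')).
  by move=> y hy; rewrite (monoS k.+1) mem_cat hy.
case: i hi => [|i] hi.
  change ((x :: a)`_0) with x.
  by apply: gen_mem; rewrite monoS mem_cat; apply/orP; left; apply/mapP; exists m => //; rewrite monoS mem_cat hm orbT.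
change ((x :: a)`_i.+1) with (a`_i).
apply: gen_subl (IHa k.+1 i m hi hm).
by move=> y hy; rewrite (monoS k.+1) mem_cat hy orbT.
Qed.

Lemma mono_gen k a p : idealpow (gen_ideal a) k p -> gen_ideal (mono k a) p.
Proof.
elim: k p => [|k IHk] p /=.
  by move=> _; apply/gen_idealP; exists (fun _ => p); rewrite big_ord_recl big_ord0 addr0 /= mulr1.
move=> [s [hs ->]]; rewrite big_seq; apply: idl_sum; first exact: gen_idl.
move=> q /hs [hq1 hq2]; apply: (@gen_mul a (mono k a)) => //; last exact: IHk.
move=> y z hy hz; rewrite -(nth_index 0 hy); apply: mono_key => //; by rewrite index_mem.
Qed.
End Ring.


Section Mod.
Variables (A : comNzRingType) (M : lmodType A).
Implicit Types (I J : A -> Prop) (X Y T : M -> Prop).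

Lemma mp_sub I X T : submodule T -> (forall p x, I p -> X x -> T (p *: x)) -> subp (modprod I X) T.
Proof.
move=> sT h z [s [hs ->]]; rewrite big_seq; apply: sub_sum => // p /hs [h1 h2]; exact: h.
Qed.

Lemma mp_elem I X p x : I p -> X x -> modprod I X (p *: x).
Proof. by move=> hp hx; exists [:: (p, x)]; rewrite big_seq1; split => // q; rewrite inE => /eqP ->. Qed.

Lemma mp_submod I X : idl I -> submodule (modprod I X).
Proof.
move=> [h0 [hD hM]]; split; first by exists [::]; rewrite big_nil.
split.
  move=> x y [s1 [hs1 ->]] [s2 [hs2 ->]]; exists (s1 ++ s2); rewrite big_cat; split => //.
  by move=> p; rewrite mem_cat => /orP [/hs1|/hs2].
move=> c x [s1 [hs1 ->]]; exists (map (fun p => (c * p.1, p.2)) s1); split.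
  by move=> p /mapP [q /hs1 [h1 h2] ->]; split => //; apply: hM.
by rewrite big_map scaler_sumr; apply: eq_bigr => i _; rewrite scalerA.
Qed.

Lemma submod_pre X (c : A) : submodule X -> submodule (fun y => X (c *: y)).
Proof.
move=> sX; split; first by rewrite scaler0; apply: sub0.
split; first by move=> x y h1 h2; rewrite scalerDr; apply: subD.
by move=> a x h; rewrite scalerA mulrC -scalerA; apply: subZ.
Qed.

Lemma pow_step (a : seq A) k X Y : submodule X -> subp (modprod (gen_ideal a) Y) X ->
  subp (modprod (idealpow (gen_ideal a) k.+1) Y) (modprod (idealpow (gen_ideal a) k) X).
Proof.
move=> sX hYX; have sT : submodule (modprod (idealpow (gen_ideal a) k) X).
  apply: mp_submod; apply: idl_pow; exact: gen_idl.
apply: mp_sub => // p y [s [hs ->]] hy; rewrite scaler_suml big_seq; apply: sub_sum => // q /hs [h1 h2].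
rewrite mulrC -scalerA; apply: mp_elem => //; apply: hYX; exact: mp_elem.
Qed.

Definition Tm (R : M -> Prop) (L : seq A) X t :=
  addsub R (fun z => exists xs : nat -> M, (forall l, X (xs l)) /\ z = \sum_(l < t) L`_l *: xs l).

Lemma Tm_submod R L X t : submodule R -> submodule X -> submodule (Tm R L X t).
Proof.
move=> sR sX; apply: sub_add => //; split.
  exists (fun _ => 0); split; first by move=> l; apply: sub0.
  by rewrite big1 // => l _; rewrite scaler0.
split.
  move=> x y [xs [hx ->]] [ys [hy ->]]; exists (fun l => xs l + ys l); split.
    by move=> l; apply: subD.
  by rewrite -big_split; apply: eq_bigr => l _; rewrite scalerDr.
move=> c x [xs [hx ->]]; exists (fun l => c *: xs l); split; first by move=> l; apply: subZ.
by rewrite scaler_sumr; apply: eq_bigr => l _; rewrite !scalerA mulrC.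
Qed.

Lemma Tm_mono R L X t : submodule X -> subp (Tm R L X t) (Tm R L X t.+1).
Proof.
move=> sX z [r [w [hr [[xs [hx hw]] hz]]]]; subst z w; exists r, (\sum_(l < t) L`_l *: xs l); split => //; split => //.
exists (fun l => if l == t then 0 else xs l); split.
  by move=> l; case: ifP => _ //; apply: sub0.
rewrite big_ord_recr /= eqxx scaler0 addr0; apply: eq_bigr => l _.
by rewrite ifN // neq_ltn ltn_ord.
Qed.

Lemma step_bnd (a : seq A) k Y X v : submodule Y -> submodule X ->
  subp (modprod (gen_ideal a) Y) X -> bnd (modprod (gen_ideal a) Y) X v ->
  bnd (modprod (idealpow (gen_ideal a) k.+1) Y) (modprod (idealpow (gen_ideal a) k) X)
      (size (mono k a) * v).
Proof.
move=> sY sX hYX hb.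
set J := gen_ideal a; set R := modprod (idealpow J k.+1) Y; set L := mono k a.
have sR : submodule R by apply: mp_submod; apply: idl_pow; exact: gen_idl.
have : bnd (Tm R L X 0) (Tm R L X (size L)) (\sum_(j < size L) v).
  apply: bnd_tele => j hj.
  - exact: Tm_submod.
  - exact: Tm_mono.
  apply: (@bnd_mul _ _ L`_j (modprod J Y) X) => //.
  - move=> y hy; exists (L`_j *: y), 0; rewrite addr0; split; last first.
      split => //; exists (fun _ => 0); split; first by move=> l; apply: sub0.
      by rewrite big1 // => l _; rewrite scaler0.
    have hc : idealpow J k L`_j by apply: mono_in; apply: mem_nth.
    move: y hy; apply: mp_sub; first exact: submod_pre.
    move=> p x hp hx; rewrite scalerA; apply: mp_elem => //.
    rewrite mulrC; exact: prod_elem.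
  - move=> z [r [w [hr [[xs [hx hw]] hz]]]]; subst z w; exists (xs j), (r + \sum_(l < j) L`_l *: xs l).
    split => //; split.
      exists r, (\sum_(l < j) L`_l *: xs l); split => //; split => //; by exists xs.
    by rewrite big_ord_recr /= addrA addrC.
rewrite sum_nat_const card_ord mulnC => hb'; apply: bnd_mono hb' _ _.
  by move=> z [r [w [hr [[xs [hx hw]] hz]]]]; subst z w; rewrite big_ord0 addr0.
apply: mp_sub; first exact: Tm_submod.
move=> p x hp hx; have hg := @mono_gen _ k a p hp; move/gen_idealP: hg => [f hf]; subst p.
exists 0, (\sum_(i < size L) f i * L`_i *: x); rewrite add0r; split; first exact: sub0.
split; last by rewrite scaler_suml.
exists (fun i => f i *: x); split; first by move=> l; exact: subZ sX hx.
by apply: eq_bigr => i _; rewrite scalerA mulrC.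
Qed.
End Mod.


Lemma lam_bnd (A : comNzRingType) (M : lmodType A) (a : seq A) (F : nat -> M -> Prop) (v : nat -> nat) n :
 (forall j, submodule (F j)) -> (forall j, subp (modprod (gen_ideal a) (F j)) (F j.+1)) ->
 (forall j, (1 <= j)%N -> bnd (modprod (gen_ideal a) (F j)) (F j.+1) (v j)) ->
 bnd (modprod (idealpow (gen_ideal a) n) (F 1%N)) (F n.+1)
   (\sum_(j < n) size (mono (n - j.+1) a) * v j.+1)%N.
Proof.
move=> sF hJF hv.
pose Rs j := modprod (idealpow (gen_ideal a) (n - j)) (F j.+1).
have sRs : forall j, submodule (Rs j).
  by move=> j; apply: mp_submod; apply: idl_pow; exact: gen_idl.
have : bnd (Rs 0%N) (Rs n) (\sum_(j < n) size (mono (n - j.+1) a) * v j.+1)%N.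
  apply: (@bnd_tele _ _ Rs (fun j => size (mono (n - j.+1) a) * v j.+1)%N) => j hj.
  - exact: sRs.
  - by rewrite /Rs -(subnSK hj); apply: pow_step.
  by rewrite /Rs -(subnSK hj); apply: step_bnd => //; apply: hv.
move=> hb; apply: bnd_mono hb _ _; first by rewrite /Rs subn0.
move=> x hx; rewrite /Rs subnn; rewrite -(scale1r x); exact: mp_elem.
Qed.


Definition Sg (f : nat -> int) (n : nat) : int := \sum_(i < n.+1) f i.
Definition Dl (f : nat -> int) (n : nat) : int := f n - (if n is n'.+1 then f n' else 0).
Definition conv (p : {poly int}) (f : nat -> int) (n : nat) : int :=
  \sum_(i < n.+1) p`_i * f (n - i)%N.

Lemma conv_1X p f n : conv ((1 - 'X) * p) f n = Dl (conv p f) n.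
Proof.
rewrite /conv /Dl.
under eq_bigr do rewrite mulrBl mul1r coefB coefXM mulrBl.
rewrite sumrB [X in _ - X]big_ord_recl /= mul0r add0r.
case: n => [|n]; first by rewrite big_ord0 subr0.
congr (_ - _); apply: eq_bigr => i _ /=; by rewrite subSS.
Qed.

Lemma conv1 f n : conv 1 f n = f n.
Proof.
rewrite /conv big_ord_recl coef1 eqxx mul1r subn0 big1 ?addr0 // => i _.
by rewrite coef1 /= mul0r.
Qed.

Lemma conv_pow d f : conv ((1 - 'X) ^+ d) f = iter d Dl f.
Proof.
elim: d => [|d IH]; apply: functional_extensionality => n.
  by rewrite expr0 conv1.
by rewrite exprS conv_1X IH.
Qed.

Lemma SgDl f : Sg (Dl f) = f.
Proof.
apply: functional_extensionality => n; elim: n => [|n IH].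
  by rewrite /Sg /Dl big_ord_recl big_ord0 /= subr0 addr0.
by rewrite /Sg big_ord_recr /= -/(Sg (Dl f) n) IH /Dl addrC subrK.
Qed.

Lemma iterSgDl d f : iter d Sg (iter d Dl f) = f.
Proof. by elim: d f => [|d IH] f //; rewrite iterSr iterS SgDl IH. Qed.

Lemma Sg_sub f g : Sg (fun n => f n - g n) = (fun n => Sg f n - Sg g n).
Proof. by apply: functional_extensionality => n; rewrite /Sg sumrB. Qed.

Lemma iterSg_sub d f g : iter d Sg (fun n => f n - g n) = (fun n => iter d Sg f n - iter d Sg g n).
Proof. by elim: d => [|d IH] //=; rewrite IH Sg_sub. Qed.

Definition convV (c V : nat -> int) (n : nat) : int := \sum_(j < n.+1) c (n - j)%N * V j.

Lemma convV_Sg c V n : convV (Sg c) V n = Sg (convV c V) n.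
Proof.
elim: n => [|n IH].
  by rewrite /convV /Sg !big_ord_recl !big_ord0 /= !addr0.
rewrite [RHS]/Sg big_ord_recr /= -/(Sg (convV c V) n) -IH.
rewrite {1}/convV big_ord_recr /= subnn.
rewrite [X in _ = _ + X]/convV [X in _ = _ + X]big_ord_recr /= subnn.
have -> : Sg c 0 = c 0%N by rewrite /Sg big_ord_recl big_ord0 addr0.
rewrite addrA; congr (_ + _).
rewrite /convV -big_split /=; apply: eq_bigr => i _.
have hi : (i <= n)%N by rewrite -ltnS ltn_ord.
by rewrite subSn // {1}/Sg big_ord_recr /= mulrDl.
Qed.

Definition csz (A : comNzRingType) (a : seq A) (k : nat) : int := (size (mono k a))%:Z.

Lemma csz_cons (A : comNzRingType) (x : A) a : csz (x :: a) = Sg (csz a).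
Proof.
apply: functional_extensionality => k; elim: k => [|k IH].
  by rewrite /Sg big_ord_recl big_ord0 addr0 /csz !mono0.
rewrite /csz monoS size_cat size_map PoszD -/(csz (x :: a) k) IH.
by rewrite /Sg (big_ord_recr k.+1) /=.
Qed.

Lemma convV_nil (A : comNzRingType) V : convV (csz ([::] : seq A)) V = V.
Proof.
apply: functional_extensionality => n; rewrite /convV big_ord_recr /= subnn /csz mono0 /= mul1r.
rewrite big1 ?add0r // => i _; have hi : (0 < n - i)%N by rewrite subn_gt0.
by case: (n - i)%N hi => [|m] //= _; rewrite mul0r.
Qed.

Lemma convV_csz (A : comNzRingType) (a : seq A) V : convV (csz a) V = iter (size a) Sg V.
Proof.
elim: a => [|x a IH]; first exact: convV_nil.
apply: functional_extensionality => n; rewrite csz_cons convV_Sg IH /=.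
by [].
Qed.

Lemma SgS f n : Sg f n.+1 = Sg f n + f n.+1.
Proof. by rewrite /Sg big_ord_recr. Qed.

Lemma Sg_evneg f K : (forall n, (K <= n)%N -> f n <= -1) ->
  exists K', forall n, (K' <= n)%N -> Sg f n <= -1.
Proof.
move=> hf.
have hm : forall m, Sg f (K + m) <= Sg f K - m%:Z.
  elim=> [|m IH]; first by rewrite addn0 subr0.
  rewrite addnS SgS.
  have := hf (K + m.+1)%N (leq_addr _ _); rewrite addnS => h.
  have -> : (m.+1)%:Z = m%:Z + 1 by rewrite -PoszD addn1.
  lia.
exists (K + `|Sg f K|%N + 1)%N => n hn.
have := hm (n - K)%N; rewrite subnKC; last by lia.
move=> h; have h2 : ((n - K)%N)%:Z >= (`|Sg f K|%N)%:Z + 1 by rewrite -PoszD lez_nat; lia.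
have h3 : Sg f K <= (`|Sg f K|%N)%:Z by rewrite abszE ler_norm.
lia.
Qed.

Lemma sum_stab (D : nat -> int) K : (forall n, (K <= n)%N -> D n = 0) ->
  forall m, \sum_(i < K + m) D i = \sum_(i < K) D i.
Proof.
move=> hD; elim=> [|m IH]; first by rewrite addn0.
by rewrite addnS big_ord_recr /= IH hD ?addr0 // leq_addr.
Qed.

Lemma key_ineq (D : nat -> int) K d : (forall n, (K <= n)%N -> D n = 0) ->
  (forall n, 0 <= iter d Sg D n) -> 0 <= \sum_(i < K) D i.
Proof.
move=> hD hpos; case: d hpos => [|d] hpos.
  by apply: sumr_ge0 => i _; exact: hpos.
rewrite leNgt; apply/negP => hneg.
have h1 : forall n, (K <= n)%N -> Sg D n <= -1.
  move=> n hn; rewrite /Sg -(subnKC (leqW hn)) sum_stab //.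
have : forall e, exists K', forall n, (K' <= n)%N -> iter e Sg (Sg D) n <= -1.
  elim=> [|e [K' IH]]; first by exists K.
  by apply: Sg_evneg IH.
move=> /(_ d) [K' hK']; have := hpos K'; rewrite iterSr; have := hK' K' (leqnn _).
lia.
Qed.


Lemma Posz_sum (I : Type) (r : seq I) (P : pred I) (F : I -> nat) :
  ((\sum_(i <- r | P i) F i)%N)%:Z = \sum_(i <- r | P i) (F i)%:Z.
Proof. by elim/big_rec2: _ => // i x y _ <-; rewrite PoszD. Qed.

Lemma unbounded (v : nat -> nat) : (forall K0, exists j, (K0 <= j)%N /\ v j <> 0%N) ->
  forall m : nat, exists N, (1 <= N)%N /\ m%:Z <= \sum_(1 <= j < N) (v j)%:Z.
Proof.
move=> hv; elim=> [|m [N [hN IH]]].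
  by exists 1%N; rewrite big_geq.
have [j [hj hvj]] := hv N.
exists j.+1; split; first by [].
rewrite (@big_cat_nat _ _ _ N 1 j.+1 _ _ hN (leqW hj)) /= big_nat_recr //=.
have h0 : 0 <= \sum_(N <= i < j) (v i)%:Z by apply: sumr_ge0.
have h1 : 1 <= (v j)%:Z by rewrite lez_nat lt0n; apply/eqP.
have -> : (m.+1)%:Z = m%:Z + 1 by rewrite -PoszD addn1.
by have := lerD IH (lerD h0 h1); rewrite add0r.
Qed.

Theorem theorem3p1 (A : comNzRingType) (m q : A -> Prop) (M : lmodType A)
  (d : nat) (F : nat -> M -> Prop) (a : seq A)
  (lam v : nat -> nat) (h : {poly int}) :
  noetherian A -> local_ring m -> infinite_residue m ->
  m_primary m q ->
  fin_gen M -> module_dim_eq M d ->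
  good_qfiltration q F ->
  size a = d -> superficial_seq q F a ->
  sally_dim_eq (gen_ideal a) F d ->
  lam 0%N = 0%N ->
  (forall n, (1 <= n)%N ->
     length_eq (F n.+1) (modprod (idealpow (gen_ideal a) n) (F 1%N)) (lam n)) ->
  (forall k, h`_k = \sum_(i < k.+1) ((1 - 'X) ^+ d : {poly int})`_i * (lam (k - i)%N)%:Z) ->
  (forall j, (1 <= j)%N -> length_eq (F j.+1) (modprod (gen_ideal a) (F j)) (v j)) ->
  exists N : nat, h.[1] <= \sum_(1 <= j < N) (v j)%:Z.
Proof.
move=> _ _ _ hprim _ _ hgood hsize hsup _ hlam0 hlam hh hv.
case: hgood => [[_ [sF [_ hqF]]] _].
case: hprim => [[[_ [hq0 [hqB hqM]]] _] _].
have hqD : forall x y, q x -> q y -> q (x + y).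
  move=> x y hx hy; have -> : x + y = x - (0 - y) by rewrite sub0r opprK.
  by apply: (hqB) => //; apply: (hqB).
have hJq : subp (gen_ideal a) q.
  move=> x; apply: gen_sub => // c y hy; apply: (hqM) => //.
  rewrite -(nth_index 0 hy); have hi : (index y a < size a)%N by rewrite index_mem.
  by case: (hsup _ hi).
have hJF : forall j, subp (modprod (gen_ideal a) (F j)) (F j.+1).
  move=> j; apply: subp_trans (hqF j); apply: mp_sub; first by apply: mp_submod; split => //; split; [exact: hqD | move=> c x hx; exact: (hqM)].
  by move=> p x hp hx; apply: mp_elem => //; apply: (hJq).
have hvb : forall j, (1 <= j)%N -> bnd (modprod (gen_ideal a) (F j)) (F j.+1) (v j).
  move=> j hj; apply: bnd_of_length => //; last exact: (hv).
  apply: mp_submod; exact: gen_idl.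
have hlamle : forall n, (1 <= n)%N -> (lam n <= \sum_(j < n) size (mono (n - j.+1) a) * v j.+1)%N.
  move=> n hn; have [[N [h0 [hk [hsub hstr]]]] _] := hlam n hn.
  apply: (lam_bnd sF hJF hvb (N := N)).
  - by split.
  - by move=> x /h0.
  - by move=> x /hk.
pose Lz n := (lam n)%:Z.
pose V n := if n is 0%N then 0 else (v n)%:Z.
pose hz k := h`_k.
have hLV : forall n, Lz n <= iter d Sg V n.
  move=> n; rewrite -hsize -convV_csz /convV big_ord_recl /= mulr0 add0r.
  case: n => [|n]; first by rewrite /Lz hlam0 big_ord0.
  apply: le_trans (_ : ((\sum_(j < n.+1) size (mono (n.+1 - j.+1) a) * v j.+1)%N)%:Z <= _).
    by rewrite lez_nat; apply: (hlamle).
  by rewrite Posz_sum le_eqVlt; apply/orP; left; apply/eqP; apply: eq_bigr => j _; rewrite PoszM.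
have hzL : hz = iter d Dl Lz.
  apply: functional_extensionality => k; rewrite /hz hh -conv_pow.
  by [].
have hLz : iter d Sg hz = Lz by rewrite hzL iterSgDl.
pose D n := V n - hz n.
have hD : forall n, 0 <= iter d Sg D n.
  move=> n; rewrite /D iterSg_sub hLz subr_ge0; exact: (hLV).
case: (classic (exists K0, forall j, (K0 <= j)%N -> v j = 0%N)) => [[K0 hK0]|hnot].
  pose K := maxn (maxn K0 (size h)) 1.
  have hDK : forall n, (K <= n)%N -> D n = 0.
    move=> n hn; rewrite /D /V /hz; case: n hn => [|n] hn; first by rewrite /K in hn; lia.
    rewrite hK0; last by rewrite /K in hn; lia.
    rewrite nth_default ?subr0 //; rewrite /K in hn.
apply: leq_trans hn; exact: leq_trans (leq_maxr K0 _) (leq_maxl _ 1).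
  have := key_ineq hDK hD; rewrite /D sumrB subr_ge0 => hle.
  exists K; rewrite (@horner_coef_wide _ K); last by rewrite /K; lia.
  under eq_bigr do rewrite expr1n mulr1.
  apply: le_trans hle _; rewrite le_eqVlt; apply/orP; left; apply/eqP.
  rewrite -(big_mkord xpredT V) big_ltn; last by rewrite /K; lia.
  rewrite /= add0r; apply: eq_big_nat => i /andP [hi _].
  by case: i hi.
have hv' : forall K0, exists j, (K0 <= j)%N /\ v j <> 0%N.
  move=> K0; apply: NNPP => hn; apply: hnot; exists K0 => j hj.
  apply: NNPP => hvj; apply: hn; by exists j.
have [N [_ hN]] := unbounded hv' `|h.[1]|%N.
exists N; apply: le_trans hN; rewrite abszE; exact: ler_norm.
Qed.
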